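(* Let $s\ge 1$ be real, let $Y\subseteq V$ be nonempty and let $X\subseteq Y$. Then $X$ is $s$-sparse in $Y$ if and only if $|Y_k\cap X|<k/s$ for every integer $k=1,2,\dots,|Y|$. In particular, if $X$ is $s$-sparse in $Y$, then $|X|<|Y|/s$.
   Context: Let $G$ be a finite graph with vertex set $V$, $|V|=n$, and $t=\chi_f(G)$. Fix a weight function $w:V\to\mathbb{R}_{\ge0}$ with $w(V)=t$ and $w(I)\le 1$ for every independent set $I$ of $G$, where $w(A)=\sum_{v\in A}w(v)$. List the vertices as $v_1,\dots,v_n$ so that $w(v_{i+1})\le w(v_i)$ for all $i$. Every subset $X\subseteq V$ is ordered according to this ordering of $V$, and $X_k$ denotes the set of the first $k$ elements of $X$; for real $s\ge1$, $X_s:=X_{\lfloor s\rfloor}$. For real $s\ge1$ and $Y\subseteq V$, a nonempty subset $X\subseteq Y$ is called $s$-principal in $Y$ if $X\subseteq Y_{s|X|}$ (i.e., all elements of $X$ are among the first $\lfloor s|X|\rfloor$ elements of $Y$). A subset $X\subseteq Y$ is called $s$-sparse in $Y$ if $X$ contains no subset that is $s$-principal in $Y$. *)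

(* Defs.v *)
From mathcomp Require Import all_boot all_order all_algebra.
From mathcomp Require Import reals.
Set Implicit Arguments. Unset Strict Implicit. Unset Printing Implicit Defensive.
Import Order.TTheory GRing.Theory Num.Theory.
Local Open Scope ring_scope.

(* The vertex set V is 'I_n; vertex i is v_(i+1) in the paper's listing,
   so the ordering of V is the natural order of indices. *)

Definition simple_graph (n : nat) (G : rel 'I_n) : Prop :=
  symmetric G /\ irreflexive G.

Definition independent (n : nat) (G : rel 'I_n) (I : {set 'I_n}) : bool :=
  [forall x in I, forall y in I, ~~ G x y].

Definition wt (R : realType) (n : nat) (w : 'I_n -> R) (A : {set 'I_n}) : R :=
  \sum_(v in A) w v.

Definition frac_colouring (R : realType) (n : nat) (G : rel 'I_n)
  (y : {set 'I_n} -> R) : Prop :=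
  (forall I, 0 <= y I) /\ (forall I, ~~ independent G I -> y I = 0) /\
  (forall v : 'I_n, 1 <= \sum_(I : {set 'I_n} | v \in I) y I).

Definition is_frac_chromatic (R : realType) (n : nat) (G : rel 'I_n) (t : R)
  : Prop :=
  (exists2 y, frac_colouring G y & \sum_I y I = t) /\
  (forall y, frac_colouring G y -> t <= \sum_I y I).

(* Y_k : the first k elements of Y (in the order of V). *)
Definition firstk (n : nat) (Y : {set 'I_n}) (k : nat) : {set 'I_n} :=
  [set y in Y | #|[set z in Y | (z <= y)%N]| <= k]%N.

Definition firstr (R : realType) (n : nat) (Y : {set 'I_n}) (s : R)
  : {set 'I_n} :=
  firstk Y `|Num.floor s|%N.

Definition principal (R : realType) (n : nat) (s : R) (Y X : {set 'I_n}) : bool :=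
  [&& X != set0, X \subset Y & X \subset firstr Y (s * #|X|%:R)].

Definition sparse (R : realType) (n : nat) (s : R) (Y X : {set 'I_n}) : bool :=
  (X \subset Y) && [forall Z : {set 'I_n}, (Z \subset X) ==> ~~ principal s Y Z].

(* Main.v *)
Require Import Defs.
From mathcomp Require Import all_boot all_order all_algebra.
From mathcomp Require Import reals.
Import Order.TTheory GRing.Theory Num.Theory.
Local Open Scope ring_scope.
Set Implicit Arguments.

Lemma firstk_sub (n : nat) (Y : {set 'I_n}) k : firstk Y k \subset Y.
Proof. by apply/subsetP => y; rewrite inE => /andP[]. Qed.

Lemma firstk_mono (n : nat) (Y : {set 'I_n}) k k' : (k <= k')%N ->
  firstk Y k \subset firstk Y k'.
Proof.
move=> kk; apply/subsetP => y; rewrite !inE => /andP[-> h] /=.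
exact: leq_trans h kk.
Qed.

Lemma rank_le (n : nat) (Y : {set 'I_n}) y :
  (#|[set z in Y | (z <= y)%N]| <= #|Y|)%N.
Proof. by apply: subset_leq_card; apply/subsetP => z; rewrite inE => /andP[]. Qed.

Lemma firstk_full (n : nat) (Y : {set 'I_n}) k : (#|Y| <= k)%N -> firstk Y k = Y.
Proof.
move=> hk; apply/setP => y; rewrite inE; case: (y \in Y) => //=.
by apply/idP; exact: leq_trans (rank_le Y y) hk.
Qed.

Lemma firstk_min (n : nat) (Y Z : {set 'I_n}) j : Z \subset firstk Y j ->
  Z \subset firstk Y (minn j #|Y|).
Proof.
move=> /subsetP h; apply/subsetP => y /h; rewrite !inE => /andP[-> hj] /=.
by rewrite leq_min hj rank_le.
Qed.

Lemma le_floorn (R : realType) (x : R) k : 0 <= x ->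
  (k <= `|Num.floor x|)%N = (k%:R <= x).
Proof.
move=> x0.
have f0 : (0 <= Num.floor x)%R by rewrite floor_ge0.
rewrite -lez_nat gez0_abs // floor_ge_int.
by rewrite -[k%:R]/((k%:Z)%:~R).
Qed.
Unset Implicit Arguments.

Theorem lemma3 (R : realType) (n : nat) (G : rel 'I_n) (t : R)
  (w : 'I_n -> R) (s : R) (Y X : {set 'I_n}) :
  simple_graph G ->
  is_frac_chromatic G t ->
  (forall v, 0 <= w v) ->
  wt w [set: 'I_n] = t ->
  (forall I, independent G I -> wt w I <= 1) ->
  (forall i j : 'I_n, (i <= j)%N -> w j <= w i) ->
  1 <= s ->
  Y != set0 ->
  X \subset Y ->
  (sparse s Y X <->
     (forall k : nat, (1 <= k <= #|Y|)%N ->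
        (#|firstk Y k :&: X|%:R < k%:R / s))) /\
  (sparse s Y X -> #|X|%:R < #|Y|%:R / s).
Proof.
move=> _ _ _ _ _ _ s1 Yn0 XY.
have s0 : 0 < s by apply: lt_le_trans s1.
have Y1 : (1 <= #|Y|)%N by rewrite card_gt0.
have part1 : sparse s Y X <->
     (forall k : nat, (1 <= k <= #|Y|)%N ->
        (#|firstk Y k :&: X|%:R < k%:R / s)).
  split.
  - move=> /andP[_ /forallP sp] k /andP[k1 kY].
    rewrite ltNge; apply/negP => H.
    have := sp (firstk Y k :&: X); rewrite subsetIr /=; apply/negP/negPn.
    set m := #|firstk Y k :&: X| in H *.
    have kpos : 0 < k%:R / s :> R by rewrite divr_gt0 // ltr0n.
    have m0 : (0 < m)%N by rewrite -(ltr0n R); apply: lt_le_trans H.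
    apply/and3P; split.
    + by rewrite -card_gt0.
    + exact: subset_trans (subsetIl _ _) (firstk_sub _ _).
    + apply: subset_trans (subsetIl _ _) _; rewrite /firstr; apply: firstk_mono.
      rewrite le_floorn; last by rewrite mulr_ge0 // ltW.
      by rewrite mulrC -ler_pdivrMr.
  - move=> H; apply/andP; split => //; apply/forallP => Z; apply/implyP => ZX.
    apply/negP => /and3P[Zn0 ZY Zf].
    set m := #|Z| in Zf.
    have m1 : (1 <= m)%N by rewrite card_gt0.
    have sm0 : 0 <= s * m%:R by rewrite mulr_ge0 // ltW.
    set j := `|Num.floor (s * m%:R)|%N in Zf.
    have j1 : (1 <= j)%N.
      rewrite le_floorn //; rewrite -[1%:R]mulr1; apply: ler_pM => //.
      by rewrite ler1n.
    have Zk := firstk_min Zf.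
    have := H (minn j #|Y|); rewrite leq_min j1 Y1 geq_minr => /(_ isT).
    apply/negP; rewrite -leNgt.
    apply: (@le_trans _ _ m%:R).
      rewrite ler_pdivrMr // mulrC -le_floorn //; exact: geq_minl.
    rewrite ler_nat; apply: subset_leq_card.
    by rewrite subsetI Zk ZX.
split => //.
move=> /part1 /(_ #|Y|); rewrite Y1 leqnn firstk_full //.
by rewrite (setIidPr XY) => /(_ isT).
Qed.
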